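(* Let $k$ be an algebraically closed field and let $A$ be a finite dimensional $k$-algebra. If $A$ does not have a non-trivial grading, then $A$ is a basic algebra.
   Context: A grading on $A$ is a decomposition $A=\bigoplus_{i\in\mathbb{Z}}A_i$ into subspaces with $A_iA_j\subseteq A_{i+j}$ for all $i,j\in\mathbb{Z}$. The trivial grading is $A_0=A$ (all other components zero); a grading is non-trivial if $A_i\neq 0$ for some $i\neq 0$. Here ''$A$ has a non-trivial grading'' means there is a non-trivial grading on an algebra isomorphic to $A$. *)

(* Defs.v *)
From HB Require Import structures.
From mathcomp Require Import all_boot all_order all_algebra all_field.
Set Implicit Arguments. Unset Strict Implicit. Unset Printing Implicit Defensive.
Import GRing.Theory.
Local Open Scope ring_scope.

Section Defs.
Variables (k : fieldType) (A : falgType k).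

(* A Z-grading of A: subspaces V i (i : int), only finitely many nonzero
   (those outside the finite list s vanish; automatic in finite dimension),
   whose sum is direct and equal to A, with V i * V j <= V (i + j). *)
Definition is_grading (V : int -> {vspace A}) : Prop :=
  [/\ (exists s : seq int,
        [/\ uniq s, (forall i, i \notin s -> V i = 0%VS),
            (\sum_(i <- s) V i)%VS = fullv & directv (\sum_(i <- s) V i)]) &
   forall (i j : int) (x y : A), x \in V i -> y \in V j -> x * y \in V (i + j)].

Definition is_nontrivial_grading (V : int -> {vspace A}) : Prop :=
  is_grading V /\ exists i : int, i != 0 /\ V i != 0%VS.

Definition has_nontrivial_grading : Prop :=
  exists V : int -> {vspace A}, is_nontrivial_grading V.

Definition idempotent (e : A) : Prop := e * e = e.

Definition primitive_idempotent (e : A) : Prop :=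
  [/\ idempotent e, e != 0 &
      forall f g : A, idempotent f -> idempotent g -> f * g = 0 -> g * f = 0 ->
        e = f + g -> f = 0 \/ g = 0].

Definition complete_primitive_orthogonal (n : nat) (e : 'I_n -> A) : Prop :=
  [/\ forall i, primitive_idempotent (e i),
      forall i j, i != j -> e i * e j = 0 &
      \sum_(i < n) e i = 1].

Definition in_rideal (e u : A) : Prop := exists a : A, u = e * a.

Definition rmod_hom (e f : A) (h : A -> A) : Prop :=
  [/\ forall u, in_rideal e u -> in_rideal f (h u),
      forall u v, in_rideal e u -> in_rideal e v -> h (u + v) = h u + h v &
      forall u a, in_rideal e u -> h (u * a) = h u * a].

Definition rmod_iso (e f : A) : Prop :=
  exists h g : A -> A,
    [/\ rmod_hom e f h, rmod_hom f e g,
        forall u, in_rideal e u -> g (h u) = u &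
        forall v, in_rideal f v -> h (g v) = v].

(* Basic algebra (Assem-Simson-Skowronski, Def. I.6.1): A_A = e_1 A + ... + e_n A
   for a complete set of primitive orthogonal idempotents with e_i A, e_j A
   non-isomorphic for i <> j. *)
Definition basic_algebra : Prop :=
  exists (n : nat) (e : 'I_n -> A),
    complete_primitive_orthogonal e /\
    forall i j, i != j -> ~ rmod_iso (e i) (e j).

End Defs.

(* Main.v *)
Require Import Defs.
From HB Require Import structures.
From mathcomp Require Import all_boot all_order all_algebra all_field.
From Stdlib Require Import Classical.
Import GRing.Theory.
Local Open Scope ring_scope.
Definition s0 : seq int := [:: 0; 1; -1].
Section G.
Variables (k : fieldType) (A : falgType k) (e f : A).
Hypotheses (He : e * e = e) (ff : f * f = f) (ef : e * f = 0) (fe : f * e = 0)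
  (ef1 : e + f = 1).
Lemma eeY Y : e * (e * Y) = e * Y. Proof. by rewrite mulrA He. Qed.
Lemma efY Y : e * (f * Y) = 0. Proof. by rewrite mulrA ef mul0r. Qed.
Lemma feY Y : f * (e * Y) = 0. Proof. by rewrite mulrA fe mul0r. Qed.
Lemma ffY Y : f * (f * Y) = f * Y. Proof. by rewrite mulrA ff. Qed.

Definition P (x y : A) : 'End(A) := (amulr y \o amull x)%VF.
Lemma PE x y a : P x y a = x * a * y.
Proof. by rewrite comp_lfunE !lfunE. Qed.

Definition V0 := limg (P e e + P f f).
Definition V1 := limg (P e f).
Definition V2 := limg (P f e).

Ltac simpl_e := rewrite ?(mulrDl, mulrDr); repeat (rewrite -mulrA); rewrite ?(eeY, efY, feY, ffY, He, ef, fe, ff, mulr0, mul0r, addr0, add0r).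

Lemma memV0 z : z \in V0 <-> z = e * z * e + f * z * f.
Proof.
split.
  move=> /memv_imgP [a _ ->]; rewrite add_lfunE !PE. simpl_e. by [].
move=> ->; have -> : e*z*e + f*z*f = (P e e + P f f) z by rewrite add_lfunE !PE.
exact: memv_img (memvf _).
Qed.
Lemma memV1 z : z \in V1 <-> z = e * z * f.
Proof.
split.
  move=> /memv_imgP [a _ ->]; rewrite !PE. simpl_e. by [].
move=> ->; rewrite -(PE e f z); exact: memv_img (memvf _).
Qed.
Lemma memV2 z : z \in V2 <-> z = f * z * e.
Proof.
split.
  move=> /memv_imgP [a _ ->]; rewrite !PE. simpl_e. by [].
move=> ->; rewrite -(PE f e z); exact: memv_img (memvf _).
Qed.

Definition V (i : int) : {vspace A} :=
  if i == 0 then V0 else if i == 1 then V1 else if i == -1 then V2 else 0%VS.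

Lemma memVP i z : z \in V i ->
  [\/ i = 0 /\ z = e * z * e + f * z * f, i = 1 /\ z = e * z * f,
     i = -1 /\ z = f * z * e | z = 0].
Proof.
rewrite /V; case: eqP => [-> /memV0 H|_]; first by constructor 1.
case: eqP => [-> /memV1 H|_]; first by constructor 2.
case: eqP => [-> /memV2 H|_]; first by constructor 3.
by rewrite memv0 => /eqP ->; constructor 4.
Qed.

Lemma Vmul i j x y : x \in V i -> y \in V j -> x * y \in V (i + j).
Proof.
move=> /memVP [[-> Hx]|[-> Hx]|[-> Hx]|->]; last by rewrite mul0r mem0v.
all: move=> /memVP [[-> Hy]|[-> Hy]|[-> Hy]|->]; last by rewrite mulr0 mem0v.
all: rewrite Hx Hy /V /=.
all: simpl_e; try exact: mem0v.
all: match goal with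
  | |- context [V0] => apply/memV0
  | |- context [V1] => apply/memV1
  | |- context [V2] => apply/memV2 end; simpl_e.
all: by [].
Qed.

Lemma grading_exists : (exists a, e * a * f != 0) -> has_nontrivial_grading A.
Proof.
move=> [a Ha]; exists V; split; last first.
  exists 1; split; first by [].
  rewrite /V /=; apply/eqP => H.
  have : e * a * f \in V1 by apply/memV1; simpl_e.
  by rewrite H memv0 (negPf Ha).
split; last exact: Vmul.
exists s0; split.
- by [].
- move=> i Hi; rewrite /V.
  do 3 (case: eqP => [Ei|_]; first by rewrite Ei in Hi).
  by [].
- rewrite /s0 !big_cons big_nil addv0 /V /=.
  apply/eqP; rewrite eqEsubv subvf /=; apply/subvP => u _.
  have Hu : u = (e*u*e + f*u*f) + (e*u*f + (f*u*e)).
    rewrite -{1}[u]mul1r -{1}[u]mulr1 -ef1.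
    simpl_e; rewrite -!addrA; congr (_ + _).
    by rewrite [RHS]addrC -addrA.
  rewrite Hu; apply: memv_add; first by apply/memV0; simpl_e.
  by apply: memv_add; [apply/memV1|apply/memV2]; simpl_e.
- suff H : directv (V0 + (V1 + V2)).
    by rewrite directvE /= /s0 !big_cons !big_nil addv0 !addn0; exact: H.
  rewrite directv_addE /=; apply/and3P; split.
  + exact: directv_trivial.
  + apply/directv_addP; apply/eqP; rewrite -subv0; apply/subvP => u.
    move=> /memv_capP [/memV1 H1 /memV2 H2]; rewrite memv0; apply/eqP.
    by rewrite H1 H2; simpl_e.
  + rewrite -subv0; apply/subvP => u.
    move=> /memv_capP [/memV0 H0 /memv_addP [u1 /memV1 H1 [u2 /memV2 H2 Hu]]].
    have E1 : e*u*f = u1 by rewrite Hu H1 H2; simpl_e.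
    have E1' : e*u*f = 0 by rewrite H0; simpl_e.
    have E2 : f*u*e = u2 by rewrite Hu H1 H2; simpl_e.
    have E2' : f*u*e = 0 by rewrite H0; simpl_e.
    by rewrite memv0 Hu -E1 -E2 E1' E2' addr0.
Qed.
End G.
Section D.
Variables (k : fieldType) (A : falgType k).

Definition orth_rel : rel A := fun p q => (p * q == 0) && (q * p == 0).

Definition good (e : A) (s : seq A) : Prop :=
  [/\ forall x, x \in s -> primitive_idempotent x,
      forall x, x \in s -> x * e = x /\ e * x = x,
      pairwise orth_rel s & \sum_(x <- s) x = e].

Lemma decomp n : forall e : A, e * e = e -> e != 0 ->
  (\dim (limg (amull e)) <= n)%N -> exists s, good e s.
Proof.
elim: n => [|n IH] e He e0 Hd.
  exfalso; move: Hd; rewrite leqn0 dimv_eq0 => /eqP H.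
  have : amull e 1 \in limg (amull e) by apply: memv_img; apply: memvf.
  by rewrite H memv0 lfunE /= mulr1 (negPf e0).
have [Hp|Hnp] := classic (primitive_idempotent e).
  exists [:: e]; split.
  - by move=> x; rewrite inE => /eqP ->.
  - by move=> x; rewrite inE => /eqP ->.
  - by [].
  - by rewrite big_cons big_nil addr0.
have [f [g [[Hf Hg Hfg Hgf Hefg] [f0 g0]]]] :
  exists f g : A, [/\ f * f = f, g * g = g, f * g = 0, g * f = 0 &
       e = f + g] /\ f != 0 /\ g != 0.
  apply: NNPP => Hne; apply: Hnp; split => // f g H1 H2 H3 H4 H5.
  apply: NNPP => Hor; apply: Hne; exists f, g; split; first by split.
  by split; apply/eqP => H0; apply: Hor; [left|right].
have ef : e * f = f by rewrite Hefg mulrDl Hf Hgf addr0.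
have eg : e * g = g by rewrite Hefg mulrDl Hg Hfg add0r.
have fe : f * e = f by rewrite Hefg mulrDr Hf Hfg addr0.
have ge : g * e = g by rewrite Hefg mulrDr Hg Hgf add0r.
have mem_e : forall x : A, e * x \in limg (amull e).
  by move=> x; have := memv_img (amull e) (memvf x); rewrite lfunE.
have sub : forall h : A, e * h = h -> (limg (amull h) <= limg (amull e))%VS.
  move=> h Hh; apply/subvP => u /memv_imgP [b _ ->].
  by rewrite lfunE /= -Hh -mulrA.
have notin : forall h h' : A, h' * h = 0 -> h' * h' = h' -> h' != 0 ->
     e * h' = h' -> ~~ (limg (amull e) <= limg (amull h))%VS.
  move=> h h' H0 H1 H2 H3; apply/negP => /subvP Hs.
  have /Hs /memv_imgP [b _] := mem_e h'; rewrite H3 lfunE /= => Hb.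
  by move: H2; rewrite -H1 {2}Hb mulrA H0 mul0r eqxx.
have ltf : (\dim (limg (amull f)) < \dim (limg (amull e)))%N.
  by rewrite (ltn_leqif (dimv_leqif_sup (sub f ef))); exact: (notin f g).
have ltg : (\dim (limg (amull g)) < \dim (limg (amull e)))%N.
  by rewrite (ltn_leqif (dimv_leqif_sup (sub g eg))); exact: (notin g f).
have [sf [Pf Lf Of Sf]] : exists s, good f s.
  by apply: IH => //; rewrite -ltnS; exact: leq_trans ltf Hd.
have [sg [Pg Lg Og Sg]] : exists s, good g s.
  by apply: IH => //; rewrite -ltnS; exact: leq_trans ltg Hd.
exists (sf ++ sg); split.
- by move=> x; rewrite mem_cat => /orP [/Pf|/Pg].
- move=> x; rewrite mem_cat => /orP [/Lf [H1 H2]|/Lg [H1 H2]].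
    by split; [rewrite -H1 -mulrA fe | rewrite -H2 mulrA ef].
  by split; [rewrite -H1 -mulrA ge | rewrite -H2 mulrA eg].
- rewrite pairwise_cat Of Og !andbT; apply/allrelP => p q /Lf [Hp1 Hp2] /Lg [Hq1 Hq2].
  rewrite /orth_rel.
  have -> : p * q = 0 by rewrite -Hp1 -Hq2 -mulrA (mulrA f) Hfg mul0r mulr0.
  have -> : q * p = 0 by rewrite -Hq1 -Hp2 -mulrA (mulrA g) Hgf mul0r mulr0.
  by rewrite eqxx.
- by rewrite big_cat /= Sf Sg Hefg.
Qed.
End D.

Lemma central (k : fieldType) (A : falgType k) :
  ~ has_nontrivial_grading A -> forall e : A, e * e = e -> forall a, e * a = a * e.
Proof.
move=> Hng e He a; set f := 1 - e.
have ef : e * f = 0 by rewrite /f mulrBr mulr1 He subrr.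
have fe : f * e = 0 by rewrite /f mulrBl mul1r He subrr.
have ff : f * f = f by rewrite {1}/f mulrBl mul1r ef subr0.
have ef1 : e + f = 1 by rewrite /f addrC subrK.
have fe1 : f + e = 1 by rewrite addrC.
have H1 : forall b, e * b * f = 0.
  move=> b; case: (eqVneq (e * b * f) 0) => // Hb; exfalso; apply: Hng.
  exact: (@grading_exists _ _ e f He ff ef fe ef1 (ex_intro _ b Hb)).
have H2 : forall b, f * b * e = 0.
  move=> b; case: (eqVneq (f * b * e) 0) => // Hb; exfalso; apply: Hng.
  exact: (@grading_exists _ _ f e ff He fe ef fe1 (ex_intro _ b Hb)).
have L : e * a = e * a * e by rewrite -{1}[e * a]mulr1 -ef1 mulrDr H1 addr0.
have R : a * e = e * a * e.
  by rewrite -{1}[a * e]mul1r -ef1 mulrDl !mulrA H2 addr0.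
by rewrite L R.
Qed.

Theorem mainTheorem1 (k : closedFieldType) (A : falgType k) :
  ~ has_nontrivial_grading A -> basic_algebra A.
Proof.
move=> Hng; have C := @central _ _ Hng.
have [s [Ps Ls Os Ss]] :=
  @decomp _ A (\dim (limg (amull (1:A)))) 1 (mulr1 1) (oner_neq0 A) (leqnn _).
have orth : forall i j : 'I_(size s), i != j -> nth 0 s i * nth 0 s j = 0.
  move=> i j Hij; have /pairwiseP Hp := Os.
  case: (ltngtP i j) => H.
  - by have /andP [/eqP -> _] := Hp 0 i j (ltn_ord i) (ltn_ord j) H.
  - by have /andP [_ /eqP ->] := Hp 0 j i (ltn_ord j) (ltn_ord i) H.
  - by rewrite (val_inj H) eqxx in Hij.
exists (size s), (fun i => nth 0 s i); split.
- split.
  + by move=> i; apply: Ps; exact: mem_nth.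
  + exact: orth.
  + by rewrite -Ss (big_nth 0) big_mkord.
- move=> i j Hij [h [g [[Hh1 Hh2 Hh3] [Hg1 Hg2 Hg3] Hgh _]]].
  have [Hi Hi0 _] := Ps _ (mem_nth 0 (ltn_ord i)).
  have [Hj Hj0 _] := Ps _ (mem_nth 0 (ltn_ord j)).
  have Rei : in_rideal (nth 0 s i) (nth 0 s i) by exists (nth 0 s i).
  have [b Hb] := Hh1 _ Rei.
  have h0 : h (nth 0 s i) = 0.
    rewrite -{1}Hi (Hh3 _ _ Rei) Hb (C _ Hj) -mulrA orth ?mulr0 //.
    by rewrite eq_sym.
  have R0 : in_rideal (nth 0 s j) 0 by exists 0; rewrite mulr0.
  have g0 : g 0 = 0.
    have := Hg2 _ _ R0 R0; rewrite addr0 => H.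
    by move: (congr1 (fun x => x - g 0) H); rewrite /= subrr addrK.
  by move: Hi0; rewrite -(Hgh _ Rei) h0 g0 eqxx.
Qed.
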